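(* Let $N=n+k$, let $\lambda=(\lambda_1,\dots,\lambda_n)$ be a partition with $\lambda_1>k$, and let $y=y_\mu$ be a solution of the Bethe ansatz equations. Then $$G_\lambda(y|\ominus t)=q\sum_{r=0}^{\lambda_1-1-k}h_{\lambda_1-1-k-r}(t_1,\dots,t_{r+1})\,G_{(\lambda_2-1,\dots,\lambda_n-1,r)}(y|\ominus t)\prod_{i=1}^r(1+\beta t_i),$$ where the $h_m$ are complete symmetric polynomials and the polynomial on the right, indexed by an integer sequence, is defined by the determinant formula in the context.
   Context: $\beta$ indeterminate, $x\oplus y=x+y+\beta xy$, $x\ominus y=(x-y)/(1+\beta y)$, $\ominus x=-x/(1+\beta x)$. Parameters $t_1,\dots,t_N$ with $t_j=0$ for $j>N$, $\ominus t=(\ominus t_1,\ominus t_2,\dots)$, $(x|s)^m=\prod_{i=1}^m(x\oplus s_i)$. For an integer sequence $\theta=(\theta_1,\dots,\theta_n)$ with $\theta_i+n-i\ge0$, $G_\theta(y|s)=\det[(y_j|s)^{\theta_i+n-i}(1+\beta y_j)^{i-1}]_{i,j}/\det[y_j^{n-i}]_{i,j}$; for partitions this is the factorial Grothendieck polynomial. Bethe ansatz equations: $(-1)^n\frac{\Pi(y)}{(1+\beta y_i)^n}\prod_{j=1}^N(y_i\ominus t_j)+q=0$ for $i=1,\dots,n$, with $\Pi(y)=\prod_i(1+\beta y_i)$; $y_\mu$ ($\mu\subset(k^n)$) denotes the solution in formal power series in $q$ with pairwise distinct components $y_i\equiv t_i\pmod q$, $i\in I_\mu=\{\mu_{n+1-i}+i\}$.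 *)

(* Defs.v *)
From HB Require Import structures.
From mathcomp Require Import all_boot all_order all_algebra.
Set Implicit Arguments. Unset Strict Implicit. Unset Printing Implicit Defensive.
Import Order.TTheory GRing.Theory Num.Theory.
Local Open Scope ring_scope.

Section Defs.
Variable K : fieldType.

Definition oplus (b x y : K) : K := x + y + b * x * y.
Definition ominus (b x y : K) : K := (x - y) / (1 + b * y).
Definition ominus1 (b x : K) : K := - x / (1 + b * x).

(* the sequence (-) s, parameters indexed from 1 *)
Definition ominus_seq (b : K) (s : nat -> K) : nat -> K := fun j => ominus1 b (s j).

Definition fpow (b x : K) (s : nat -> K) (m : nat) : K :=
  \prod_(1 <= i < m.+1) oplus b x (s i).

(* G_theta(y|s) for an integer sequence theta = (theta_1,...,theta_n),
   stored 0-based: theta i = theta_{i+1}, i < n.  Row index i (0-based)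
   corresponds to paper row i+1: exponent theta_{i+1} + n - (i+1),
   factor (1 + b y_j)^i, Vandermonde entry y_j^(n-(i+1)). *)
Definition Gfun (b : K) (n : nat) (theta : nat -> int) (y : 'I_n -> K)
    (s : nat -> K) : K :=
  \det (\matrix_(i < n, j < n)
          (fpow b (y j) s (absz (theta i + (n - i.+1)%:Z)) * (1 + b * y j) ^+ i))
  / \det (\matrix_(i < n, j < n) (y j ^+ (n - i.+1))).

Definition hcomp (m p : nat) (x : nat -> K) : K :=
  \sum_(a : {ffun 'I_p -> 'I_m.+1} | (\sum_(i < p) (a i : nat))%N == m)
     \prod_(i < p) x i.+1 ^+ a i.

Definition PiY (b : K) (n : nat) (y : 'I_n -> K) : K := \prod_(i < n) (1 + b * y i).

Definition BAE (b q : K) (N n : nat) (t : nat -> K) (y : 'I_n -> K) : Prop :=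
  forall i : 'I_n,
    (-1) ^+ n * (PiY b y / (1 + b * y i) ^+ n) * \prod_(1 <= j < N.+1) ominus b (y i) (t j)
      + q = 0.

Definition shiftSeq (n : nat) (lam : nat -> nat) (r : nat) : nat -> int :=
  fun i => if (i.+1 < n)%N then (lam i.+1)%:Z - 1 else r%:Z.

End Defs.

(* Main.v *)
Require Import Defs.
From HB Require Import structures.
From mathcomp Require Import all_boot all_order all_algebra perm.
From mathcomp Require Import ring zify.
Import Order.TTheory GRing.Theory Num.Theory.
Local Open Scope ring_scope.

Section H.
Variable K : fieldType.
Variable x : nat -> K.

Fixpoint Hrec (p m : nat) : K :=
  match p with
  | 0 => (m == 0)%N%:R
  | p'.+1 => \sum_(0 <= i < m.+1) Hrec p' i * x p'.+1 ^+ (m - i)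
  end.

Lemma Hrec0 p : Hrec p 0%N = 1.
Proof. by elim: p => [|p IH] //=; rewrite big_nat1 IH subnn expr0 mulr1. Qed.

Lemma Hrec_rec p a : Hrec p.+1 a.+1 = Hrec p a.+1 + x p.+1 * Hrec p.+1 a.
Proof.
rewrite /= big_nat_recr //= subnn expr0 mulr1 addrC; congr (_ + _).
rewrite mulr_sumr; apply: eq_big_nat => i /andP[_ hi].
by rewrite subSn // exprS mulrCA.
Qed.

Lemma HrecS p m : Hrec p.+1 m = \sum_(0 <= i < m.+1) Hrec p i * x p.+1 ^+ (m - i).
Proof. by []. Qed.

Arguments Hrec : simpl never.

Definition Qp (p M : nat) : {poly K} := \prod_(i < p) \poly_(j < M.+1) (x i.+1 ^+ j).

Lemma Qp_coef p M m : (m <= M)%N -> (Qp p M)`_m = Hrec p m.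
Proof.
elim: p m => [|p IH] m hm.
  by rewrite /Qp big_ord0 coef1.
rewrite /Qp big_ord_recr /= -/(Qp p M) coefM /=.
rewrite HrecS big_mkord.
apply: eq_bigr => i _; rewrite IH; last by apply: leq_trans hm; rewrite -ltnS.
rewrite coef_poly ifT //; rewrite ltnS; apply: leq_trans hm; exact: leq_subr.
Qed.

Lemma hcomp_Hrec m p : hcomp m p x = Hrec p m.
Proof.
rewrite -(@Qp_coef p m m (leqnn m)) /hcomp.
have -> : Qp p m = \prod_(i < p) \sum_(j < m.+1) (x i.+1 ^+ j *: 'X^j).
  by apply: eq_bigr => i _; rewrite poly_def.
rewrite bigA_distr_bigA /= coef_sum.
rewrite [LHS]big_mkcond /=; apply: eq_bigr => f _.
have -> : \prod_(i < p) (x i.+1 ^+ f i *: 'X^(f i))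
   = (\prod_(i < p) x i.+1 ^+ f i)%:P * 'X^(\sum_(i < p) (f i : nat)).
  rewrite -prodrXr rmorph_prod -big_split /=.
  by apply: eq_bigr => i _; rewrite mul_polyC.
rewrite coefCM coefXn [m == _]eq_sym.
by case: (_ == m); rewrite ?mulr1 ?mulr0.
Qed.

Lemma ypow (y : K) m :
  y ^+ m = \sum_(0 <= r < m.+1) Hrec r.+1 (m - r) * \prod_(1 <= i < r.+1) (y - x i).
Proof.
elim: m => [|m IH].
  by rewrite big_nat1 subnn Hrec0 big_geq // mulr1 expr0.
set P := fun r => \prod_(1 <= i < r.+1) (y - x i).
have PS r : P r.+1 = P r * (y - x r.+1) by rewrite /P big_nat_recr.
rewrite exprS IH mulr_sumr.
have E1 : forall r, y * (Hrec r.+1 (m - r) * P r)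
  = Hrec r.+1 (m - r) * P r.+1 + x r.+1 * (Hrec r.+1 (m - r) * P r).
  by move=> r; rewrite PS; ring.
rewrite (eq_bigr _ (fun r _ => E1 r)) big_split /=.
rewrite [RHS]big_nat_recr //= subnn Hrec0 mul1r.
have E2 : \sum_(0 <= i < m.+1) Hrec i.+1 (m.+1 - i) * P i
   = \sum_(0 <= i < m.+1) (Hrec i (m.+1 - i) * P i) + \sum_(0 <= i < m.+1) x i.+1 * (Hrec i.+1 (m - i) * P i).
  rewrite -big_split /=; apply: eq_big_nat => i /andP[_ hi].
  by rewrite subSn // Hrec_rec; ring.
rewrite E2 addrAC; congr (_ + _).
rewrite [X in _ = X + _]big_nat_recl // subn0.
have -> : Hrec 0 m.+1 = 0 by [].
rewrite mul0r add0r [LHS]big_nat_recr //= subnn Hrec0 mul1r.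
by congr (_ + _); apply: eq_big_nat => i _; rewrite subSS.
Qed.
End H.

Section L.
Variable K : fieldType.
Variables (b : K) (t : nat -> K).
Hypothesis hbt : forall j, 1 + b * t j != 0.

Lemma oplus_om (x : K) j : oplus b x (ominus1 b (t j)) = ominus b x (t j).
Proof. rewrite /oplus /ominus1 /ominus; field; exact: hbt. Qed.

Lemma fpow_om (x : K) m :
  fpow b x (ominus_seq b t) m = \prod_(1 <= i < m.+1) ominus b x (t i).
Proof. by apply: eq_bigr => i _; rewrite /ominus_seq oplus_om. Qed.

Lemma prod_om (x : K) r :
  \prod_(1 <= i < r.+1) ominus b x (t i) * \prod_(1 <= i < r.+1) (1 + b * t i)
  = \prod_(1 <= i < r.+1) (x - t i).
Proof.
rewrite -big_split /=; apply: eq_bigr => i _; rewrite /ominus.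
field; exact: hbt.
Qed.

Lemma fpow_split (x : K) N d :
  (forall j, (N < j)%N -> t j = 0) ->
  fpow b x (ominus_seq b t) (N + d) = fpow b x (ominus_seq b t) N * x ^+ d.
Proof.
move=> ht; rewrite !fpow_om (@big_cat_nat _ _ _ N.+1) //=; last by lia.
congr (_ * _).
rewrite (@eq_big_nat _ _ _ _ _ _ (fun _ => x)); first by rewrite prodr_const_nat; congr (_ ^+ _); lia.
move=> i /andP[hi _]; rewrite ht //= /ominus mulr0 addr0 subr0 divr1 //.
Qed.
End L.

Lemma det_shift (K : fieldType) (n' : nat) (A X : 'M[K]_n'.+1) (d : 'I_n'.+1 -> K) :
  (forall j, X ord0 j = A ord_max j * d j) ->
  (forall (i : 'I_n') j, X (lift ord0 i) j = A (lift ord_max i) j * d j) ->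
  \det X = (-1) ^+ n' * \det A * \prod_j d j.
Proof.
move=> h0 hS.
pose s : 'S_n'.+1 := lift_perm ord0 ord_max 1.
have -> : X = row_perm s (A *m diag_mx (\row_j d j)).
  apply/matrixP => i j; rewrite mul_mx_diag !mxE.
  case: (unliftP ord0 i) => [i' ->|->].
    by rewrite /s lift_perm_lift perm1 hS.
  by rewrite /s lift_perm_id h0.
rewrite row_permE !det_mulmx det_perm det_diag.
rewrite odd_lift_perm odd_perm1 /= addbF signr_odd.
by rewrite mulrA; congr (_ * _); apply: eq_bigr => j _; rewrite mxE.
Qed.

Theorem mainTheorem9 (K : fieldType) (b q : K) (n k : nat) (t : nat -> K)
    (lam : nat -> nat) (y : 'I_n -> K) :
  (forall j, (n + k < j)%N -> t j = 0) ->
  (forall j, 1 + b * t j != 0) ->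
  (forall i, 1 + b * y i != 0) ->
  (0 < n)%N ->
  (forall i j, (i <= j)%N -> (j < n)%N -> (lam j <= lam i)%N) ->
  (k < lam 0%N)%N ->
  injective y ->
  BAE b q (n + k) t y ->
  Gfun b (fun i => (lam i)%:Z) y (ominus_seq b t)
  = q * \sum_(0 <= r < (lam 0%N - k)%N)
          (hcomp (lam 0%N - 1 - k - r)%N r.+1 t
           * Gfun b (shiftSeq n lam r) y (ominus_seq b t)
           * \prod_(1 <= i < r.+1) (1 + b * t i)).
Proof.
move=> ht hbt hby hn hlam hk hinj hbae.
case: n hn y hby hlam hinj hbae ht => [//|n'] _ y hby _ _ hbae ht.
set m := (lam 0%N - 1 - k)%N.
have hm : (lam 0%N - k = m.+1)%N by rewrite /m; lia.
rewrite hm.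
set s := ominus_seq b t.
pose V := \det (\matrix_(i < n'.+1, j < n'.+1) (y j ^+ (n'.+1 - i.+1))).
pose Mr r := \matrix_(i < n'.+1, j < n'.+1)
   (fpow b (y j) s (absz (shiftSeq n'.+1 lam r i + (n'.+1 - i.+1)%:Z)) * (1 + b * y j) ^+ i).
pose M := \matrix_(i < n'.+1, j < n'.+1)
   (fpow b (y j) s (absz ((lam i)%:Z + (n'.+1 - i.+1)%:Z)) * (1 + b * y j) ^+ i).
have GE : forall r, Gfun b (shiftSeq n'.+1 lam r) y s = \det (Mr r) / V by [].
under eq_bigr => r _ do rewrite GE.
have -> : Gfun b (fun i => (lam i)%:Z) y s = \det M / V by [].
suff key : \det M = q * \sum_(0 <= r < m.+1)
   (hcomp (m - r) r.+1 t * \det (Mr r) * \prod_(1 <= i < r.+1) (1 + b * t i)).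
  rewrite key -mulrA mulr_suml; congr (_ * _); apply: eq_bigr => r _.
  by rewrite mulrAC -!mulrA.
pose Pi := PiY b y.
have hPi : Pi != 0 by apply/prodf_neq0 => i _; exact: hby.
pose z : K := (-1) ^+ n'.
have hz : z * z = 1 by rewrite /z -exprMn mulrNN mulr1 expr1n.
pose kap := q * z / Pi.
pose a r := hcomp (m - r) r.+1 t * \prod_(1 <= i < r.+1) (1 + b * t i).
pose F r (j : 'I_n'.+1) := fpow b (y j) s r * (1 + b * y j) ^+ n'.+1.
have hrow0 : forall j, M ord0 j = kap * \sum_(0 <= r < m.+1) a r * F r j.
  move=> j; rewrite mxE /=.
  have -> : (lam 0%N + (n'.+1 - 1) = (n'.+1 + k) + m)%N by rewrite /m; lia.
  rewrite /s fpow_split // expr0 mulr1.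
  have hc : (1 + b * y j) ^+ n'.+1 != 0 by rewrite expf_neq0.
  have hPN : fpow b (y j) (ominus_seq b t) (n'.+1 + k) = kap * (1 + b * y j) ^+ n'.+1.
    have hb := hbae j.
    have hq : q = - ((-1) ^+ n'.+1 * (Pi / (1 + b * y j) ^+ n'.+1)
                 * \prod_(1 <= j0 < (n'.+1 + k).+1) ominus b (y j) (t j0)).
      by apply/eqP; rewrite -addr_eq0 addrC hb.
    rewrite fpow_om // /kap hq exprS -/z.
    set P := \prod_(_ <= _ < _) _.
    transitivity (z * z * P); first by rewrite hz mul1r.
    field; rewrite hPi hc //.
  rewrite hPN (@ypow _ t (y j) m) -mulrA !mulr_sumr; apply: eq_bigr => r _.
  rewrite -hcomp_Hrec -(@prod_om _ b t hbt) -(@fpow_om _ b t hbt) /a /F -/s; ring.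
pose X r := \matrix_(i < n'.+1, j < n'.+1) (if i == ord0 then F r j else M i j).
have hcof : forall r j, cofactor (X r) ord0 j = cofactor M ord0 j.
  move=> r j; rewrite /cofactor; congr (_ * \det _); apply/matrixP => i j'.
  by rewrite !mxE eq_sym (negbTE (neq_lift _ _)).
have hdetX : forall r, \det (X r) = \sum_j F r j * cofactor M ord0 j.
  by move=> r; rewrite (expand_det_row _ ord0); apply: eq_bigr => j _; rewrite hcof mxE eqxx.
have hX : forall r, \det (X r) = z * \det (Mr r) * Pi.
  move=> r; apply: det_shift.
    by move=> j; rewrite !mxE eqxx /F /shiftSeq /= ltnn subnn addr0 exprSr mulrA.
  move=> i j; rewrite !mxE lift_eqF /shiftSeq lift0 lift_max ltnS ltn_ord.
  rewrite exprSr mulrA; congr (fpow _ _ _ _ * _ * _).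
  have e : (n'.+1 - i.+1 = (n'.+1 - i.+2).+1)%N by have := ltn_ord i; lia.
  rewrite e; congr absz; lia.
transitivity (kap * \sum_(0 <= r < m.+1) a r * \det (X r)).
  rewrite (expand_det_row M ord0).
  under eq_bigr => j _ do rewrite hrow0.
  under [Y in _ = _ * Y]eq_bigr => r _ do rewrite hdetX mulr_sumr.
  rewrite [RHS]mulr_sumr; under [RHS]eq_bigr => r _ do rewrite mulr_sumr.
  rewrite [RHS]exchange_big /=; apply: eq_bigr => j _.
  rewrite -mulrA mulr_suml mulr_sumr; apply: eq_bigr => r _; ring.
rewrite !mulr_sumr; apply: eq_bigr => r _.
rewrite hX /kap /a; rewrite -[q in RHS]mulr1 -hz; field; exact: hPi.
Qed.
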